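(* Suppose there is a constant $a>0$ such that $\mathbb P(\|\hat F^{(i)}_t-F^{(i)}\|\ge x)\le2\exp(-atx^2)$ for all $i\in\mathbb K$, $x>0$, $t\ge1$. Then for every admissible policy $\pi$, every $T\ge1$ and every $x\ge0$, $$\mathbb P\bigl(\|\hat F^\pi_T-\tilde F^\pi_T\|>x\bigr)\le2KT\exp\Bigl(-a\frac{Tx^2}{K^2}\Bigr).$$
   Context: Bandit setting: $K\ge1$, $\mathbb K=\{1,\dots,K\}$; arm $i$ produces i.i.d. rewards $X^{(i)}_1,X^{(i)}_2,\dots$ with distribution function $F^{(i)}$, all rewards mutually independent. An admissible policy $\pi=(\pi_1,\pi_2,\dots)$ chooses $\pi_t\in\mathbb K$ as a measurable function of an independent randomization variable and of past actions/rewards; $\tau_i(t)=\sum_{s\le t}\mathbf 1\{\pi_s=i\}$, the reward at time $t$ is $X^\pi_t=X^{(i)}_{\tau_i(t)}$ on $\{\pi_t=i\}$. $\hat F^\pi_T(y)=\frac1T\sum_{t\le T}\mathbf 1\{X^\pi_t\le y\}$, $\hat F^{(i)}_t(y)=\frac1t\sum_{s\le t}\mathbf 1\{X^{(i)}_s\le y\}$, and $\tilde F^\pi_T=\frac1T\sum_{i=1}^K\tau_i(T)F^{(i)}$. $\|\cdot\|$ is a norm on a vector space of bounded functions $\mathbb R\to\mathbb R$ containing all these functions. *)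

(* Defs.v *)
From HB Require Import structures.
From mathcomp Require Import all_boot all_order all_algebra.
From mathcomp Require Import all_classical all_reals all_analysis.
Set Implicit Arguments. Unset Strict Implicit. Unset Printing Implicit Defensive.
Import Order.TTheory GRing.Theory Num.Theory.
Local Open Scope classical_set_scope.
Local Open Scope ring_scope.

Section Bandit.
Context {d : measure_display} {Omega : measurableType d} {R : realType}.

(* Outer probability: P*(A) = inf { P B | B measurable, A ⊆ B }.
   Equals P A whenever A is measurable. *)
Definition Pstar (P : probability Omega R) (A : set Omega) : \bar R :=
  ereal_inf [set P B | B in [set B | measurable B /\ A `<=` B]].

Definition mutual_indep {I : eqType} (P : probability Omega R) (D : set I)
    (Y : I -> Omega -> R) : Prop :=
  forall (J : seq I) (B : I -> set R),
    uniq J -> (forall j, j \in J -> D j) -> (forall j, measurable (B j)) ->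
    P (\bigcap_(j in [set` J]) (Y j @^-1` B j)) =
    (\prod_(j <- J) P (Y j @^-1` B j))%E.

Definition step (c : R) : R -> R := fun y => if c <= y then 1 else 0.

Definition tau {K : nat} (pi : nat -> Omega -> 'I_K) (i : 'I_K) (t : nat)
    (w : Omega) : nat :=
  \sum_(1 <= s < t.+1) (pi s w == i).

(* reward collected at time t: X^{(pi_t)}_{tau_{pi_t}(t)}; rewards of arm i are
   X i 1, X i 2, ... (X i 0 is unused) *)
Definition Xpi {K : nat} (X : 'I_K -> nat -> Omega -> R)
    (pi : nat -> Omega -> 'I_K) (t : nat) (w : Omega) : R :=
  X (pi t w) (tau pi (pi t w) t w) w.

Definition Fhat_arm {K : nat} (X : 'I_K -> nat -> Omega -> R) (i : 'I_K)
    (t : nat) (w : Omega) : R -> R :=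
  fun y => t%:R^-1 * \sum_(1 <= s < t.+1) (if X i s w <= y then 1 else 0).

Definition Fhat_pi {K : nat} (X : 'I_K -> nat -> Omega -> R)
    (pi : nat -> Omega -> 'I_K) (T : nat) (w : Omega) : R -> R :=
  fun y => T%:R^-1 * \sum_(1 <= t < T.+1) (if Xpi X pi t w <= y then 1 else 0).

Definition Ftilde_pi {K : nat} (F : 'I_K -> R -> R)
    (pi : nat -> Omega -> 'I_K) (T : nat) (w : Omega) : R -> R :=
  fun y => T%:R^-1 * \sum_(i < K) (tau pi i T w)%:R * F i y.

Definition past_gen {K : nat} (U : Omega -> R) (X : 'I_K -> nat -> Omega -> R)
    (pi : nat -> Omega -> 'I_K) (t : nat) : set (set Omega) :=
  [set A | (exists B : set R, measurable B /\ A = U @^-1` B)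
        \/ (exists s k, (1 <= s < t)%N /\ A = [set w | pi s w = k])
        \/ (exists s (B : set R), (1 <= s < t)%N /\ measurable B /\
                                  A = Xpi X pi s @^-1` B)].

(* admissible policy with randomization variable U: pi_t is measurable w.r.t.
   sigma(U, past actions, past rewards), for every t >= 1 (equivalently, by
   Doob-Dynkin, a measurable function of U and the past) *)
Definition admissible {K : nat} (U : Omega -> R) (X : 'I_K -> nat -> Omega -> R)
    (pi : nat -> Omega -> 'I_K) : Prop :=
  forall t k, (1 <= t)%N -> <<s past_gen U X pi t >> [set w | pi t w = k].

End Bandit.

Definition is_norm_on {R : realType} (S : set (R -> R)) (nrm : (R -> R) -> R)
  : Prop :=
  [/\ S (fun _ => 0),
      (forall f g, S f -> S g -> S (f \+ g)),
      (forall (c : R) f, S f -> S (fun y => c * f y)),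
      (forall f, S f -> exists M : R, forall y, `|f y| <= M)
    & [/\ (forall f, S f -> 0 <= nrm f),
          (forall f, S f -> nrm f = 0 -> f = (fun _ => 0)),
          (forall (c : R) f, S f -> nrm (fun y => c * f y) = `|c| * nrm f)
        & (forall f g, S f -> S g -> nrm (f \+ g) <= nrm f + nrm g)]].

(* Main.v *)
Require Import Defs.
From HB Require Import structures.
From mathcomp Require Import all_boot all_order all_algebra.
From mathcomp Require Import all_classical all_reals all_analysis.
From mathcomp Require Import ring lra.
Import Order.TTheory GRing.Theory Num.Theory.
Local Open Scope classical_set_scope.
Local Open Scope ring_scope.

Section Helpers.
Context {d : measure_display} {Omega : measurableType d} {R : realType}.
Implicit Types (P : probability Omega R).

Lemma Pstar_le P (A B : set Omega) : measurable B -> A `<=` B ->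
  (Pstar P A <= P B)%E.
Proof. by move=> mB AB; apply: ereal_inf_lbound; exists B. Qed.

Lemma Pstar_U2 P (A A1 A2 : set Omega) (a1 a2 : R) : A `<=` A1 `|` A2 ->
  (Pstar P A1 <= a1%:E)%E -> (Pstar P A2 <= a2%:E)%E ->
  (Pstar P A <= (a1 + a2)%:E)%E.
Proof.
move=> sA h1 h2; apply/lee_addgt0Pr => e e0.
have e2 : 0 < e / 2 by rewrite divr_gt0.
have [y1 [B1 [mB1 sB1] PB1] ly1] : exists2 y,
    [set P B | B in [set B | measurable B /\ A1 `<=` B]] y & (y < (a1 + e/2)%:E)%E.
  by apply: ereal_inf_lt; apply: (le_lt_trans h1); rewrite lte_fin ltrDl.
have [y2 [B2 [mB2 sB2] PB2] ly2] : exists2 y,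
    [set P B | B in [set B | measurable B /\ A2 `<=` B]] y & (y < (a2 + e/2)%:E)%E.
  by apply: ereal_inf_lt; apply: (le_lt_trans h2); rewrite lte_fin ltrDl.
subst y1 y2.
apply: le_trans (@Pstar_le P A (B1 `|` B2) _ _) _.
- exact: measurableU.
- by move=> w /sA [/sB1|/sB2]; [left|right].
apply: le_trans (measureU2 _ mB1 mB2) _.
apply: le_trans (leeD (ltW ly1) (ltW ly2)) _.
rewrite -!EFinD lee_fin; lra.
Qed.

Lemma Pstar_list P (I : eqType) (s : seq I) (Ak : I -> set Omega) (b : R)
  (A : set Omega) :
  A `<=` [set w | exists2 k, k \in s & Ak k w] ->
  (forall k, k \in s -> (Pstar P (Ak k) <= b%:E)%E) ->
  (Pstar P A <= ((size s)%:R * b)%:E)%E.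
Proof.
elim: s A => [|k s IH] A sA hb /=.
  rewrite mul0r; apply: le_trans (@Pstar_le P A set0 measurable0 _) _.
    by move=> w /sA [k]; rewrite in_nil.
  by rewrite measure0.
rewrite -addn1 natrD mulrDl mul1r addrC.
apply: (@Pstar_U2 P A (Ak k) [set w | exists2 k', k' \in s & Ak k' w]) .
- move=> w /sA [k']; rewrite in_cons => /orP [/eqP -> | ks] h; first by left.
  by right; exists k'.
- by apply: hb; rewrite mem_head.
- by apply: IH => // k' ks; apply: hb; rewrite in_cons ks orbT.
Qed.

End Helpers.

Lemma S_sum_nrm {R : realType} (S : set (R -> R)) (nrm : (R -> R) -> R)
  (I : eqType) (s : seq I) (f : I -> R -> R) :
  is_norm_on S nrm -> (forall i, i \in s -> S (f i)) ->
  S (fun y => \sum_(i <- s) f i y) /\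
  nrm (fun y => \sum_(i <- s) f i y) <= \sum_(i <- s) nrm (f i).
Proof.
case=> S0 SD SZ _ [n0 _ nZ nD].
elim: s => [|k s IH] hf.
  have -> : (fun y => \sum_(i <- [::]) f i y) = (fun _ => 0 : R).
    by apply/funext => y; rewrite big_nil.
  rewrite big_nil; split => //.
  have -> : nrm (fun _ => 0 : R) = 0; last by [].
  transitivity (nrm (fun y => 0 * (fun _ => 0 : R) y)); last by rewrite nZ // normr0 mul0r.
  by congr nrm; apply/funext => y /=; rewrite mul0r.
have [S1 n1] := IH (fun i hi => hf i ltac:(by rewrite in_cons hi orbT)).
have Sk : S (f k) by apply: hf; rewrite mem_head.
have -> : (fun y => \sum_(i <- k :: s) f i y) = f k \+ (fun y => \sum_(i <- s) f i y).
  by apply/funext => y; rewrite big_cons.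
split; first exact: SD.
by apply: le_trans (nD _ _ Sk S1) _; rewrite big_cons lerD2l.
Qed.

Section Comb.
Context {d : measure_display} {Omega : measurableType d} {R : realType}.

Lemma tau_le (K : nat) (pi : nat -> Omega -> 'I_K) i T w : (tau pi i T w <= T)%N.
Proof.
rewrite /tau; apply: (@leq_trans (\sum_(1 <= s < T.+1) 1)%N).
  by apply: leq_sum => s _; exact: leq_b1.
by rewrite sum_nat_const_nat subn1 muln1.
Qed.

Lemma count_id (K : nat) (X : 'I_K -> nat -> Omega -> R) pi w (y : R) T :
  \sum_(1 <= t < T.+1) (if Xpi X pi t w <= y then 1 else 0 : R) =
  \sum_(i < K) \sum_(1 <= s < (tau pi i T w).+1) (if X i s w <= y then 1 else 0).
Proof.
elim: T => [|T IH].
  rewrite big_geq // big1 // => i _.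
  have -> : tau pi i 0 w = 0%N by rewrite /tau big_geq.
  by rewrite big_geq.
rewrite big_nat_recr //= IH.
set j := pi T.+1 w.
have tS i : tau pi i T.+1 w = (tau pi i T w + (j == i))%N by rewrite /tau big_nat_recr.
rewrite [RHS](eq_bigr (fun i => \sum_(1 <= s < (tau pi i T w).+1)
     (if X i s w <= y then 1 else 0) +
     (if i == j then (if X j (tau pi j T w).+1 w <= y then 1 else 0) else 0))).
  rewrite big_split /= -big_mkcond big_pred1_eq /Xpi -/j tS eqxx addn1 //.
move=> i _; rewrite tS; case: eqP => [->|ne].
  by rewrite eqxx addn1 big_nat_recr.
case: eqP => [h|_]; first by case: ne.
by rewrite addn0 addr0.
Qed.

End Comb.

Theorem lemma18 (d : measure_display) (Omega : measurableType d) (R : realType)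
  (P : probability Omega R) (K : nat) (X : 'I_K -> nat -> Omega -> R)
  (F : 'I_K -> R -> R) (S : set (R -> R)) (nrm : (R -> R) -> R) (a : R) :
  (0 < K)%N ->
  (* rewards are real random variables *)
  (forall i s, (1 <= s)%N -> measurable_fun setT (X i s)) ->
  (* X^{(i)}_s has distribution function F^{(i)} *)
  (forall i s y, (1 <= s)%N -> (F i y)%:E = P [set w | X i s w <= y]) ->
  (* all rewards are mutually independent *)
  mutual_indep P [set j | (1 <= j.2)%N] (fun j : 'I_K * nat => X j.1 j.2) ->
  (* ||.|| is a norm on a vector space S of bounded functions containing all
     F^{(i)} and all empirical distribution functions *)
  is_norm_on S nrm ->
  (forall i, S (F i)) ->
  (forall i s w, (1 <= s)%N -> S (step (X i s w))) ->
  (* concentration hypothesis *)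
  0 < a ->
  (forall i (x : R) t, 0 < x -> (1 <= t)%N ->
     (Pstar P [set w | (x <= nrm (Fhat_arm X i t w \- F i))%R]
       <= (2 * expR (- (a * t%:R * x ^+ 2)))%:E)%E) ->
  forall (U : Omega -> R) (pi : nat -> Omega -> 'I_K),
    (* independent randomization variable *)
    measurable_fun setT U ->
    mutual_indep P [set j | if j is Some j' then (1 <= j'.2)%N else True]
      (fun j : option ('I_K * nat) =>
         if j is Some j' then X j'.1 j'.2 else U) ->
    admissible U X pi ->
    forall (T : nat) (x : R), (1 <= T)%N -> 0 <= x ->
      (Pstar P [set w | (x < nrm (Fhat_pi X pi T w \- Ftilde_pi F pi T w))%R]
        <= (2 * K%:R * T%:R *
            expR (- (a * (T%:R * x ^+ 2 / K%:R ^+ 2))))%:E)%E.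
Proof.
move=> K0 _ _ _ hN SF Sstep a0 hyp U pi _ _ _ T x T1 x0.
have Kp : 0 < K%:R :> R by rewrite ltr0n.
have Tp : 0 < T%:R :> R by rewrite ltr0n.
have K1 : 1 <= K%:R :> R by rewrite ler1n.
have T1' : 1 <= T%:R :> R by rewrite ler1n.
move: x0; rewrite le_eqVlt => /orP [/eqP <- | xp].
  apply: le_trans (@Pstar_le _ _ _ P _ setT measurableT (@subsetT _ _)) _.
  rewrite probability_setT lee_fin expr0n /= mulr0 mul0r mulr0 oppr0 expR0 mulr1.
  nra.
have [S0 SD SZ _ [n0 _ nZ nD]] := hN.
have SG : forall i t w, S (Fhat_arm X i t w \- F i).
  move=> i t w.
  have -> : Fhat_arm X i t w \- F i =
     (fun y => t%:R^-1 * \sum_(s <- index_iota 1 t.+1) step (X i s w) y)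
       \+ (fun y => -1 * F i y).
    by apply/funext => y /=; rewrite mulN1r.
  apply: SD; last exact: SZ.
  apply: SZ; apply: (S_sum_nrm S nrm _ (index_iota 1 t.+1) (fun s => step (X i s w)) hN _).1 => s.
  by rewrite mem_index_iota => /andP [s1 _]; apply: Sstep.
have key : forall w, nrm (Fhat_pi X pi T w \- Ftilde_pi F pi T w) <=
    T%:R^-1 * \sum_(i < K) (tau pi i T w)%:R *
       nrm (Fhat_arm X i (tau pi i T w) w \- F i).
  move=> w.
  have -> : Fhat_pi X pi T w \- Ftilde_pi F pi T w =
    (fun y => T%:R^-1 * \sum_(i <- index_enum 'I_K)
        (fun i y => (tau pi i T w)%:R * (Fhat_arm X i (tau pi i T w) w \- F i) y) i y).
    apply/funext => y /=.
    rewrite /Fhat_pi /Ftilde_pi count_id -mulrBr -sumrB; congr (_ * _).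
    apply: eq_bigr => i _; rewrite mulrBr; congr (_ - _).
    rewrite /Fhat_arm; case: (posnP (tau pi i T w)) => [->|tp].
      by rewrite mul0r big_geq.
    by rewrite mulrA mulfV ?mul1r // pnatr_eq0 -lt0n.
  have [Ss ns] := S_sum_nrm S nrm _ (index_enum 'I_K)
     (fun i y => (tau pi i T w)%:R * (Fhat_arm X i (tau pi i T w) w \- F i) y) hN
     (fun i _ => SZ _ _ (SG _ _ _)).
  rewrite nZ // ger0_norm ?invr_ge0 ?ler0n //.
  rewrite ler_pM2l ?invr_gt0 //; apply: le_trans ns _.
  apply: ler_sum => i _; rewrite nZ ?SG // ger0_norm ?ler0n //.
set b := 2 * expR (- (a * (T%:R * x ^+ 2 / K%:R ^+ 2))).
pose s := [seq (i, t) | i <- enum 'I_K, t <- iota 1 T].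
have -> : 2 * K%:R * T%:R * expR (- (a * (T%:R * x ^+ 2 / K%:R ^+ 2))) =
    (size s)%:R * b.
  by rewrite /s size_allpairs size_enum_ord size_iota natrM /b; ring.
apply: (@Pstar_list _ _ _ P _ s (fun k => [set w | T%:R * x / (K%:R * k.2%:R)
     <= nrm (Fhat_arm X k.1 k.2 w \- F k.1)])).
- move=> w /= hw.
  suff [i [ti hi]] : exists i, (1 <= tau pi i T w)%N /\
      T%:R * x / (K%:R * (tau pi i T w)%:R) <= nrm (Fhat_arm X i (tau pi i T w) w \- F i).
    exists (i, tau pi i T w) => //.
    apply/allpairsP; exists (i, tau pi i T w); split => //.
      by rewrite mem_enum.
    by rewrite mem_iota /= ti add1n ltnS tau_le.
  apply: contrapT => hne.
  have hb : forall i, (tau pi i T w)%:R * nrm (Fhat_arm X i (tau pi i T w) w \- F i)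
      <= T%:R * x / K%:R.
    move=> i; case: (posnP (tau pi i T w)) => [->|tp].
      by rewrite mul0r; apply: divr_ge0; [apply: mulr_ge0; [apply: ltW|apply: ltW] | apply: ltW].
    have hi : ~ (T%:R * x / (K%:R * (tau pi i T w)%:R) <=
                 nrm (Fhat_arm X i (tau pi i T w) w \- F i)).
      by move=> h; apply: hne; exists i; split.
    have tpR : 0 < (tau pi i T w)%:R :> R by rewrite ltr0n.
    have lt : nrm (Fhat_arm X i (tau pi i T w) w \- F i) <
        T%:R * x / (K%:R * (tau pi i T w)%:R).
      by rewrite ltNge; apply/negP.
    apply: le_trans (ler_wpM2l (ltW tpR) (ltW lt)) _.
    rewrite le_eqVlt; apply/orP; left; apply/eqP; field.
    by apply/andP; split; apply: lt0r_neq0.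
  have Tinv : 0 <= T%:R^-1 :> R by rewrite invr_ge0 ltW.
  have hs : \sum_(i < K) (tau pi i T w)%:R * nrm (Fhat_arm X i (tau pi i T w) w \- F i)
      <= \sum_(i < K) (T%:R * x / K%:R) by apply: ler_sum => i _; exact: hb.
  have := le_trans (key w) (ler_wpM2l Tinv hs).
  rewrite sumr_const card_ord.
  move=> h; have : x < x; last by rewrite ltxx.
  apply: lt_le_trans hw (le_trans h _).
  rewrite le_eqVlt; apply/orP; left; apply/eqP.
  by field; apply/andP; split; apply: lt0r_neq0.
- move=> k /allpairsP [[i t] [_ ht ->]] /=.
  move: ht; rewrite mem_iota /= => /andP [t1 tT].
  have tp : 0 < t%:R :> R by rewrite ltr0n.
  have tT' : t%:R <= T%:R :> R by rewrite ler_nat -ltnS -(add1n T).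
  apply: le_trans (hyp i _ t _ t1) _.
    by apply: divr_gt0; [apply: mulr_gt0 | apply: mulr_gt0].
  rewrite lee_fin /b ler_pM2l // ler_expR lerN2.
  have -> : a * t%:R * (T%:R * x / (K%:R * t%:R)) ^+ 2 =
     a * (T%:R * x ^+ 2 / K%:R ^+ 2) * (T%:R / t%:R).
    by field; apply/andP; split; apply: lt0r_neq0.
  apply: ler_peMr.
    by apply: mulr_ge0; [apply: ltW | apply: divr_ge0; [apply: mulr_ge0; [apply: ltW|apply: sqr_ge0] | apply: sqr_ge0]].
  by rewrite ler_pdivlMr // mul1r.
Qed.
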